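(* Consider a binary treatment variable $X\in\{0,1\}$, a binary ''intention to treat'' variable $X^*\in\{0,1\}$, and a discrete response variable $Y$, under an observational regime and, for $x\in\{0,1\}$, an interventional regime ''$X\leftarrow x$''. Write $\Pr(\cdot)$ for observational probabilities and $\Pr(\cdot\mid X\leftarrow x)$ for probabilities under intervention $X\leftarrow x$. Assume: (i) in the observational regime $X=X^*$; (ii) $\Pr(X^*=x^*\mid X\leftarrow x)=\Pr(X^*=x^* )$ for all $x,x^*\in\{0,1\}$, where $\Pr(X^*=x^* )=\Pr(X=x^* )$; (iii) $\Pr(Y=y\mid X^*=x,X=x)=\Pr(Y=y\mid X^*=x,X\leftarrow x)$ for all $x\in\{0,1\}$ and all $y$. Suppose the observational joint distribution of $(X,Y)$ is known with $0<\Pr(X=1)<1$, and the distribution of $Y$ under each intervention $X\leftarrow x$ ($x=0,1$) is known. Then, for each $x\in\{0,1\}$, the joint distribution of $(X^*,Y)$ under the intervention $X\leftarrow x$ is identified, i.e. uniquely determined by these known quantities.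
   Context: $X^*$ (''intention to treat'') denotes the treatment a patient or their doctor would choose if unconstrained; it is a pre-treatment covariate. In the interventional regime $X\leftarrow x$, treatment $x$ is imposed externally without regard to $X^*$. ''Identified'' means uniquely determined by the observational joint distribution of $(X,Y)$ together with the interventional distributions of $Y$. *)

(* Defs.v *)
From mathcomp Require Import all_boot all_order all_algebra.
From mathcomp Require Import boolp classical_sets reals constructive_ereal ereal esum.
Set Implicit Arguments. Unset Strict Implicit. Unset Printing Implicit Defensive.
Import Order.TTheory GRing.Theory Num.Theory.
Local Open Scope classical_set_scope.
Local Open Scope ring_scope.

(* Discrete distributions are given by probability mass functions on a
   choiceType (the support may be any countable subset); sums via esum. *)
Section ITT.
Context {R : realType}.

Definition is_pmf {T : choiceType} (p : T -> R) : Prop :=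
  (forall t, 0 <= p t) /\ (\esum_(t in [set: T]) (p t)%:E = 1)%E.

Definition prob {T : choiceType} (p : T -> R) (A : set T) : R :=
  fine (\esum_(t in A) (p t)%:E).

Definition cprob {T : choiceType} (p : T -> R) (A B : set T) : R :=
  prob p (A `&` B) / prob p B.

Context {Y : choiceType}.

(* Observational regime: pobs is the joint pmf of (Xs, X, Y), outcomes ((xs, x), y).
   Interventional regime X <- x: q x is the joint pmf of (Xs, Y), outcomes (xs, y)
   (in that regime X = x deterministically). *)
Definition ITT_model (pobs : bool * bool * Y -> R) (q : bool -> bool * Y -> R) : Prop :=
  [/\ is_pmf pobs,
      (forall x, is_pmf (q x)),
      (* (i) X = Xs in the observational regime (almost surely) *)
      prob pobs [set t | ~ (t.1.1 = t.1.2)] = 0,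
      (* (ii) Pr(Xs = xs | X <- x) = Pr(Xs = xs), Xs = intention to treat *)
      (forall x xs, prob (q x) [set t | t.1 = xs] = prob pobs [set t | t.1.1 = xs]) &
      (forall x y,
         cprob pobs [set t | t.2 = y] [set t | t.1.1 = x /\ t.1.2 = x]
         = cprob (q x) [set t | t.2 = y] [set t | t.1 = x])].
End ITT.

(* Main.v *)
Require Import Defs.
From mathcomp Require Import all_boot all_order all_algebra.
From mathcomp Require Import boolp classical_sets reals constructive_ereal ereal esum.
Import Order.TTheory GRing.Theory Num.Theory.
Local Open Scope classical_set_scope.
Local Open Scope ring_scope.

Section H.
Context {R : realType} {T : choiceType} {p : T -> R} (hp : is_pmf p).

Lemma esum_fin A : (\esum_(t in A) (p t)%:E) = (prob p A)%:E.
Proof.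
case: hp => p0 p1.
have g0 : forall B, (0 <= \esum_(t in B) (p t)%:E)%E.
  by move=> B; apply: esum_ge0 => t _; rewrite lee_fin.
have := esumID A [set: T] (fun t => (p t)%:E) (fun t _ => p0 t).
rewrite p1 setTI => E.
have le1 : (\esum_(t in A) (p t)%:E <= 1)%E.
  by rewrite E; apply: leeDl; exact: g0.
rewrite /prob fineK //; apply/fin_numP; split.
  by apply: contraTN isT => /eqP h; have := g0 A; rewrite h.
by apply: contraTN isT => /eqP h; move: le1; rewrite h.
Qed.

Lemma prob_ge0 A : 0 <= prob p A.
Proof.
rewrite -lee_fin -esum_fin; apply: esum_ge0 => t _; rewrite lee_fin; exact: hp.1.
Qed.

Lemma prob_split A B : prob p A = prob p (A `&` B) + prob p (A `&` ~` B).
Proof.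
apply/eqP; rewrite -eqe EFinD -!esum_fin; apply/eqP.
by apply: esumID => t _; rewrite lee_fin; exact: hp.1.
Qed.

Lemma prob_set1 t : prob p [set t] = p t.
Proof. by rewrite /prob esum_set1 //= lee_fin; exact: hp.1. Qed.

Lemma prob_mono {A B} : A `<=` B -> prob p A <= prob p B.
Proof.
move=> AB; rewrite (prob_split B A).
have -> : B `&` A = A by apply/seteqP; split => t /=; [case|move=> h; split=> //; exact: AB].
by rewrite lerDl prob_ge0.
Qed.

Lemma prob0_sub {A B} : prob p B = 0 -> A `<=` B -> prob p A = 0.
Proof.
move=> B0 AB; apply/eqP; rewrite eq_le prob_ge0 andbT -B0; exact: prob_mono.
Qed.
End H.

Section M.
Context {R : realType} {Y : choiceType}.

Lemma claimA {p : bool * bool * Y -> R} {q} : ITT_model p q ->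
  forall x y, q x (x, y) = p ((x, x), y).
Proof.
case=> hp hq hM hii hiii x y.
have p0 := hp.1; have q0 := (hq x).1.
have := hiii x y; rewrite /cprob.
have -> : [set t : bool * bool * Y | t.2 = y] `&` [set t | t.1.1 = x /\ t.1.2 = x]
   = [set ((x, x), y)].
  apply/seteqP; split => [[[a b] c]|[[a b] c]] /=.
    by move=> [-> [-> ->]].
  by case => -> -> ->.
have -> : [set t : bool * Y | t.2 = y] `&` [set t | t.1 = x] = [set (x, y)].
  apply/seteqP; split => [[a c]|[a c]] /=; first by move=> [-> ->].
  by case => -> ->.
rewrite hii !prob_set1 //.
have D : prob p [set t | t.1.1 = x] = prob p [set t | t.1.1 = x /\ t.1.2 = x].
  rewrite (prob_split hp _ [set t | t.1.2 = x]).
  rewrite (prob0_sub hp hM (A := _ `&` ~` _)); last by move=> [[a b] c] [/= -> h] /= e; apply: h => /=; rewrite -e.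
  rewrite addr0; congr prob; apply/seteqP; split => t /=; by case.
rewrite D.
set d := prob p _.
have hp1 : p ((x, x), y) <= d.
  rewrite -(prob_set1 hp); apply: (prob_mono hp) => w hw; by rewrite (hw : w = _).
have hq1 : q x (x, y) <= d.
  rewrite /d -D -(hii x) -(prob_set1 (hq x)); apply: (prob_mono (hq x)) => w hw; by rewrite (hw : w = _).
have [d0|dn0] := eqVneq d 0.
  move=> _; rewrite d0 in hp1 hq1.
  have -> : q x (x, y) = 0 by apply/eqP; rewrite eq_le hq1 q0.
  by apply/esym/eqP; rewrite eq_le hp1 p0.
by move=> e; have := congr1 (fun z => z * d) e; rewrite !divfK.
Qed.

Lemma claimB {p : bool * bool * Y -> R} {q} : ITT_model p q ->
  forall x y, prob p [set t | t.1.2 = x /\ t.2 = y] = p ((x, x), y).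
Proof.
case=> hp _ hM _ _ x y.
rewrite (prob_split hp _ [set t | t.1.1 = x]).
rewrite (prob0_sub hp hM (A := _ `&` ~` _)); last first.
  by move=> [[a b] c] /= [[-> _] h] e; apply: h.
rewrite addr0 -(prob_set1 hp); congr prob; apply/seteqP; split => [[[a b] c]|[[a b] c]] /=.
  by move=> [[-> ->] ->].
by case => -> -> ->.
Qed.

Lemma claimC {q : bool * Y -> R} : is_pmf q ->
  forall x y, prob q [set t | t.2 = y] = q (x, y) + q (~~ x, y).
Proof.
move=> hq x y.
rewrite (prob_split hq _ [set t | t.1 = x]) -!(prob_set1 hq); congr (_ + _); congr prob;
  apply/seteqP; split => [[a c]|[a c]] /=.
- by move=> [-> ->].
- by case => -> ->.
- by move=> [-> h]; case: a x h => [] [].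
- by case => -> ->; split => //; case: x.
Qed.
End M.

Theorem corollary1 (R : realType) (Y : choiceType)
  (p1 p2 : bool * bool * Y -> R) (q1 q2 : bool -> bool * Y -> R) :
  ITT_model p1 q1 -> ITT_model p2 q2 ->
  0 < prob p1 [set t | t.1.2 = true] < 1 ->
  (forall x y, prob p1 [set t | t.1.2 = x /\ t.2 = y]
               = prob p2 [set t | t.1.2 = x /\ t.2 = y]) ->
  (forall x y, prob (q1 x) [set t | t.2 = y] = prob (q2 x) [set t | t.2 = y]) ->
  forall x, q1 x = q2 x.
Proof.
move=> m1 m2 _ hobs hint x.
have ex : forall y, q1 x (x, y) = q2 x (x, y).
  by move=> y; rewrite (claimA m1) (claimA m2) -(claimB m1) -(claimB m2) hobs.
apply: funext => -[xs y].
have [->|/negPf ne] := eqVneq xs x; first exact: ex.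
have -> : xs = ~~ x.
  by clear ex; move: ne; case: xs; case: x.
have := hint x y; case: m1 => _ hq1 _ _ _; case: m2 => _ hq2 _ _ _.
rewrite (claimC (hq1 x) x) (claimC (hq2 x) x) (ex y).
by move=> h; have := congr1 (fun z => z - q2 x (x, y)) h; rewrite !(addrC (q2 x (x, y))) !addrK.
Qed.
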